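(* Let $A$ be a finite-dimensional associative algebra over $K=\mathbb{R}$ or $\mathbb{C}$, let $\mathfrak g$ be a Lie subalgebra of $A_L$, and let $r\in\mathfrak g\wedge\mathfrak g$ satisfy the classical Yang–Baxter equation $[r^{12},r^{13}]+[r^{12},r^{23}]+[r^{13},r^{23}]=0$. Then $\delta(X)=rX-Xr$, $X\in\mathrm{Symm}(A\otimes A)$, defines (via its dual) a quadratic Poisson bracket on $A$ compatible with the multiplication of $A$.
   Context: $A_L$ is the Lie algebra on $A$ with bracket $[a,b]=ab-ba$. $A\otimes A$ is an algebra with componentwise multiplication; $\mathrm{Symm}(A\otimes A)$ are the symmetric tensors. For $r=\sum_i\alpha_i\otimes\beta_i$, $r^{12}=\sum_i\alpha_i\otimes\beta_i\otimes1$, $r^{13}=\sum_i\alpha_i\otimes1\otimes\beta_i$, $r^{23}=\sum_i1\otimes\alpha_i\otimes\beta_i$ with $1$ a formal unit; the commutators only involve Lie brackets in $\mathfrak g$ (e.g. $[a\otimes b\otimes1,c\otimes1\otimes d]=[a,c]\otimes b\otimes d$). The bracket defined by $\delta$ is the one whose values on linear functions are given by the dual map $\delta^*\colon A^*\wedge A^*\to\mathrm{Sym}^2(A^* )$ (identifying $\mathrm{Symm}(A\otimes A)$ with $(\mathrm{Sym}^2A^* )^*$ and $A\wedge A$ with $(A^*\wedge A^* )^*$), extended by the Leibniz rule. Compatibility means the multiplication map $A\times A\to A$ is a Poisson map when $A\times A$ carries the product Poisson structure. *)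

(* Defs.v *)
From HB Require Import structures.
From mathcomp Require Import all_boot all_order all_algebra.
From mathcomp Require Import mpoly.
Set Implicit Arguments. Unset Strict Implicit. Unset Printing Implicit Defensive.
Import Order.TTheory GRing.Theory Num.Theory.
Local Open Scope ring_scope.

(* The finite-dimensional algebra A is K^n (row vectors 'rV[K]_n, basis e_i =
   delta_mx 0 i) with multiplication given by structure constants
   c i j k = k-th coordinate of e_i e_j. *)
Section Defs.
Variables (K : fieldType) (n : nat).
Implicit Types (c : 'I_n -> 'I_n -> 'I_n -> K).

Definition amul c (u v : 'rV[K]_n) : 'rV[K]_n :=
  \row_k \sum_i \sum_j u 0 i * v 0 j * c i j k.

Definition associative_sc c : Prop :=
  forall u v w : 'rV[K]_n, amul c (amul c u v) w = amul c u (amul c v w).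

Definition lbr c (u v : 'rV[K]_n) : 'rV[K]_n := amul c u v - amul c v u.

Definition lie_subalgebra c (G : 'M[K]_n) : Prop :=
  forall u v : 'rV[K]_n, (u <= G)%MS -> (v <= G)%MS -> (lbr c u v <= G)%MS.

(* Tensors in A (x) A are n x n matrices: T i j = coefficient of e_i (x) e_j.
   a (x) b is the matrix a^T *m b. *)
Definition in_wedge (G : 'M[K]_n) (r : 'M[K]_n) : Prop :=
  (exists (m : nat) (al be : 'I_m -> 'rV[K]_n),
     (forall i, (al i <= G)%MS) /\ (forall i, (be i <= G)%MS) /\
     r = \sum_(i < m) (al i)^T *m (be i)) /\ r^T = - r.

Definition bc c (p q k : 'I_n) : K := c p q k - c q p k.

(* Classical Yang-Baxter equation, coordinate (a,b,c') of the 3-tensor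
   [r12,r13] + [r12,r23] + [r13,r23]. *)
Definition cybe c (r : 'M[K]_n) : Prop :=
  forall a b d : 'I_n,
    \sum_p \sum_q r p b * r q d * bc c p q a
  + \sum_p \sum_q r a p * r q d * bc c p q b
  + \sum_p \sum_q r a p * r b q * bc c p q d = 0.

(* componentwise product in A (x) A : (a (x) b)(a' (x) b') = aa' (x) bb' *)
Definition tmul c (X Y : 'M[K]_n) : 'M[K]_n :=
  \matrix_(i, j) \sum_a \sum_b \sum_a' \sum_b'
      X a b * Y a' b' * c a a' i * c b b' j.

Definition delta c (r X : 'M[K]_n) : 'M[K]_n := tmul c r X - tmul c X r.

Definition symm_tensor (X : 'M[K]_n) : Prop := X^T = X.

Definition symE (k l : 'I_n) : 'M[K]_n :=
  (2%:R)^-1 *: (delta_mx k l + delta_mx l k).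

(* The bracket {x_i, x_j} of the coordinate functions defined by the dual
   delta^* : A^* /\ A^* -> Sym^2 A^* : the quadratic polynomial whose value
   on the symmetric tensor x(x)x is < x_i /\ x_j , delta(x (x) x) >, i.e.
   sum_{k,l} delta(sym(e_k (x) e_l))_{ij} x_k x_l. Pairings: <xi /\ eta, Y> =
   sum xi_a eta_b Y_ab for Y in A /\ A; <q, X> = q(X) for X symmetric. *)
Definition pcoef c (r : 'M[K]_n) (i j : 'I_n) : {mpoly K[n]} :=
  \sum_k \sum_l (delta c r (symE k l) i j)%:MP * 'X_k * 'X_l.

End Defs.

Definition pbr (K : fieldType) (m : nat) (P : 'I_m -> 'I_m -> {mpoly K[m]})
  (f g : {mpoly K[m]}) : {mpoly K[m]} :=
  \sum_i \sum_j P i j * f^`M(i) * g^`M(j).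

Definition is_poisson (K : fieldType) (m : nat)
  (P : 'I_m -> 'I_m -> {mpoly K[m]}) : Prop :=
  (forall f g, pbr P f g = - pbr P g f) /\
  (forall f g h, pbr P f (pbr P g h) + pbr P g (pbr P h f)
                 + pbr P h (pbr P f g) = 0).

(* Product Poisson structure on A x A, coordinates 'I_(n + n):
   lshift = first factor, rshift = second factor. *)
Definition left_emb (K : fieldType) (n : nat) : n.-tuple {mpoly K[n + n]} :=
  [tuple 'X_(lshift n i) | i < n].
Definition right_emb (K : fieldType) (n : nat) : n.-tuple {mpoly K[n + n]} :=
  [tuple 'X_(rshift n i) | i < n].

Definition prodP (K : fieldType) (n : nat) (P : 'I_n -> 'I_n -> {mpoly K[n]})
  (a b : 'I_(n + n)) : {mpoly K[n + n]} :=
  match split a, split b with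
  | inl i, inl j => P i j \mPo (left_emb K n)
  | inr i, inr j => P i j \mPo (right_emb K n)
  | _, _ => 0
  end.

Definition mult_map (K : fieldType) (n : nat) (c : 'I_n -> 'I_n -> 'I_n -> K)
  : n.-tuple {mpoly K[n + n]} :=
  [tuple \sum_i \sum_j (c i j k)%:MP * 'X_(lshift n i) * 'X_(rshift n j)
     | k < n].

Definition mult_poisson (K : fieldType) (n : nat)
  (c : 'I_n -> 'I_n -> 'I_n -> K) (P : 'I_n -> 'I_n -> {mpoly K[n]}) : Prop :=
  forall f g : {mpoly K[n]},
    pbr (prodP P) (f \mPo mult_map c) (g \mPo mult_map c)
    = (pbr P f g) \mPo mult_map c.

(* Main.v *)
Require Import Defs.
From HB Require Import structures.
From mathcomp Require Import all_boot all_order all_algebra.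
From mathcomp Require Import mpoly.
From mathcomp Require Import ring.
Import Order.TTheory GRing.Theory Num.Theory.
Local Open Scope ring_scope.
Set Implicit Arguments. Unset Strict Implicit. Unset Printing Implicit Defensive.

Section Chain.
Variables (R : comNzRingType) (n k : nat) (t : n.-tuple {mpoly R[k]}).

Lemma mderivXU (j l : 'I_n) : ('X_j : {mpoly R[n]})^`M(l) = (j == l)%:R%:MP.
Proof.
rewrite mderivX mnm1E; case: eqP => [->|ne].
  have -> : (U_(l) - U_(l) = 0)%MM by apply/mnmP=> i; rewrite mnmBE subnn mnm0E.
  by rewrite mpolyX0 scale1r.
by rewrite scale0r.
Qed.

Definition chainP (p : {mpoly R[n]}) := forall i,
  (p \mPo t)^`M(i) = \sum_(j < n) (p^`M(j) \mPo t) * (tnth t j)^`M(i).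

Lemma chainP1 : chainP 1.
Proof.
move=> i; rewrite -mpolyC1 comp_mpolyC mderivC big1 // => j _.
by rewrite mderivC comp_mpolyC mul0r.
Qed.

Lemma chainPX j : chainP 'X_j.
Proof.
move=> i; rewrite comp_mpolyXU -tnth_nth (bigD1 j) //= big1 ?addr0.
  by rewrite mderivXU eqxx comp_mpolyC mul1r.
move=> l ne; rewrite mderivXU eq_sym (negbTE ne) comp_mpolyC mul0r //.
Qed.

Lemma chainPM p q : chainP p -> chainP q -> chainP (p * q).
Proof.
move=> hp hq i; rewrite rmorphM /= mderivM hp hq.
rewrite mulr_suml mulr_sumr -big_split /=; apply: eq_bigr => j _.
by rewrite mderivM rmorphD /= !rmorphM /= mulrDl; congr (_ + _); ring.
Qed.

Lemma chainPD p q : chainP p -> chainP q -> chainP (p + q).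
Proof.
move=> hp hq i; rewrite rmorphD /= mderivD hp hq -big_split /=.
by apply: eq_bigr => j _; rewrite mderivD rmorphD /= mulrDl.
Qed.

Lemma chainPZ c p : chainP p -> chainP (c *: p).
Proof.
move=> hp i; rewrite comp_mpolyZ mderivZ hp scaler_sumr; apply: eq_bigr => j _.
by rewrite mderivZ comp_mpolyZ scalerAl.
Qed.

Lemma chain_rule p : chainP p.
Proof.
elim/mpolyind: p => [|c m p _ _ IH].
  by move=> i; rewrite rmorph0 mderiv0 big1 // => j _; rewrite mderiv0 rmorph0 mul0r.
apply: chainPD => //; apply: chainPZ.
rewrite mpolyXE_id; apply: big_ind => //; first exact: chainP1.
  exact: chainPM.
move=> j _; elim: (m j) => [|e IHe]; first by rewrite expr0; exact: chainP1.
by rewrite exprS; apply: chainPM => //; exact: chainPX.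
Qed.
End Chain.

Section Pois.
Variables (K : fieldType) (m : nat) (P : 'I_m -> 'I_m -> {mpoly K[m]}).
Hypothesis Pskew : forall i j, P i j = - P j i.

Lemma mderivXU' (j l : 'I_m) : ('X_j : {mpoly K[m]})^`M(l) = (j == l)%:R%:MP.
Proof.
rewrite mderivX mnm1E; case: eqP => [->|ne].
  have -> : (U_(l) - U_(l) = 0)%MM by apply/mnmP=> i; rewrite mnmBE subnn mnm0E.
  by rewrite mpolyX0 scale1r.
by rewrite scale0r.
Qed.

Lemma pbr_skew f g : pbr P f g = - pbr P g f.
Proof.
rewrite /pbr exchange_big -sumrN; apply: eq_bigr => i _.
rewrite -sumrN; apply: eq_bigr => j _; rewrite Pskew; ring.
Qed.

Lemma pbrX a g : pbr P 'X_a g = \sum_j P a j * g^`M(j).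
Proof.
rewrite /pbr (bigD1 a) //= [X in _ + X]big1 ?addr0.
  by apply: eq_bigr => j _; rewrite mderivXU' eqxx mulr1.
move=> i ne; rewrite big1 // => j _; rewrite mderivXU' eq_sym (negbTE ne); by rewrite /= mpolyC0 mulr0 mul0r.
Qed.

Lemma pbrXX a b : pbr P 'X_a 'X_b = P a b.
Proof.
rewrite pbrX (bigD1 b) //= [X in _ + X]big1 ?addr0; first by rewrite mderivXU' eqxx mulr1.
by move=> j ne; rewrite mderivXU' eq_sym (negbTE ne) mulr0.
Qed.

Definition F1 f g h := \sum_l \sum_d \sum_b \sum_c
  P l d * f^`M(l) * ((P b c)^`M(d) * g^`M(b) * h^`M(c)).
Definition S1 f g h := \sum_l \sum_d \sum_b \sum_c
  P l d * f^`M(l) * (P b c * g^`M(b)^`M(d) * h^`M(c)).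
Definition S2 f g h := \sum_l \sum_d \sum_b \sum_c
  P l d * f^`M(l) * (P b c * g^`M(b) * h^`M(c)^`M(d)).

Lemma pbr_pbr f g h : pbr P f (pbr P g h) = F1 f g h + S1 f g h + S2 f g h.
Proof.
rewrite /pbr /F1 /S1 /S2 -!big_split /=; apply: eq_bigr => l _.
rewrite -!big_split /=; apply: eq_bigr => d _.
rewrite raddf_sum /= !mulr_sumr -!big_split /=; apply: eq_bigr => b _.
rewrite raddf_sum /= !mulr_sumr -!big_split /=; apply: eq_bigr => c _.
rewrite !mderivM; ring.
Qed.

Lemma S12 f g h : S1 f g h + S2 h f g = 0.
Proof.
apply/eqP; rewrite addr_eq0; apply/eqP.
rewrite /S1 /S2 -sumrN.
under eq_bigr => x _ do under eq_bigr => y _ do rewrite exchange_big.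
under eq_bigr => x _ do rewrite exchange_big.
rewrite exchange_big.
under eq_bigr => x _ do under eq_bigr => y _ do rewrite exchange_big.
under eq_bigr => x _ do rewrite exchange_big.
apply: eq_bigr => l _; rewrite -sumrN; apply: eq_bigr => d _.
rewrite -sumrN; apply: eq_bigr => b _; rewrite -sumrN; apply: eq_bigr => c _.
rewrite (Pskew d l) mderiv_comm; ring.
Qed.
Lemma F1E f g h : F1 f g h = \sum_l \sum_b \sum_c
  f^`M(l) * g^`M(b) * h^`M(c) * \sum_d P l d * (P b c)^`M(d).
Proof.
rewrite /F1; under eq_bigr => x _ do rewrite exchange_big.
under eq_bigr => x _ do under eq_bigr => y _ do rewrite exchange_big.
apply: eq_bigr => l _; apply: eq_bigr => b _; apply: eq_bigr => c _.
rewrite mulr_sumr; apply: eq_bigr => d _; ring.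
Qed.

Hypothesis genJ : forall l b c, \sum_d (P l d * (P b c)^`M(d) + P b d * (P c l)^`M(d)
   + P c d * (P l b)^`M(d)) = 0.

Lemma F1cyc f g h : F1 f g h + F1 g h f + F1 h f g = 0.
Proof.
rewrite !F1E.
rewrite [X in _ + X + _](eq_bigr _ (fun x _ => exchange_big _ _ _ _ _ _)) /=.
rewrite [X in _ + X + _]exchange_big /=.
rewrite [X in _ + X]exchange_big /=.
rewrite [X in _ + X](eq_bigr _ (fun x _ => exchange_big _ _ _ _ _ _)) /=.
rewrite -!big_split /= big1 // => l _; rewrite -!big_split /= big1 // => b _.
rewrite -!big_split /= big1 // => c _.
transitivity (f^`M(l) * g^`M(b) * h^`M(c) * \sum_d (P l d * (P b c)^`M(d) + P b d * (P c l)^`M(d)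
   + P c d * (P l b)^`M(d))); last by rewrite genJ mulr0.
rewrite !big_split /= !mulrDr; congr (_ + _ + _); ring.
Qed.

Lemma pbr_jacobi f g h : pbr P f (pbr P g h) + pbr P g (pbr P h f)
                 + pbr P h (pbr P f g) = 0.
Proof.
rewrite !pbr_pbr.
have := F1cyc f g h; have := S12 f g h; have := S12 g h f; have := S12 h f g.
move=> e1 e2 e3 e4.
transitivity ((F1 f g h + F1 g h f + F1 h f g) + (S1 f g h + S2 h f g)
  + (S1 g h f + S2 f g h) + (S1 h f g + S2 g h f)); first ring.
by rewrite e1 e2 e3 e4 !addr0.
Qed.
End Pois.

Lemma mderivXU2 (K : fieldType) m (j l : 'I_m) : ('X_j : {mpoly K[m]})^`M(l) = (j == l)%:R%:MP.
Proof.
rewrite mderivX mnm1E; case: eqP => [->|ne].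
  have -> : (U_(l) - U_(l) = 0)%MM by apply/mnmP=> i; rewrite mnmBE subnn mnm0E.
  by rewrite mpolyX0 scale1r.
by rewrite scale0r.
Qed.

Section VF.
Variables (K : numFieldType) (n : nat).
Definition vf (v : 'I_n -> {mpoly K[n]}) (F : {mpoly K[n]}) := \sum_d v d * F^`M(d).

Lemma vfD v F G : vf v (F + G) = vf v F + vf v G.
Proof. by rewrite /vf -big_split; apply: eq_bigr => d _; rewrite mderivD mulrDr. Qed.
Lemma vfB v F G : vf v (F - G) = vf v F - vf v G.
Proof. by rewrite /vf -sumrB; apply: eq_bigr => d _; rewrite mderivB mulrBr. Qed.
Lemma vfM v F G : vf v (F * G) = vf v F * G + F * vf v G.
Proof.
rewrite /vf mulr_suml mulr_sumr -big_split; apply: eq_bigr => d _.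
rewrite mderivM /=; ring.
Qed.
Lemma vfC v a F : vf v (a%:MP * F) = a%:MP * vf v F.
Proof.
rewrite /vf mulr_sumr; apply: eq_bigr => d _; rewrite mderiv_mulC; ring.
Qed.
Lemma vf_sum v (I : finType) (F : I -> {mpoly K[n]}) :
  vf v (\sum_i F i) = \sum_i vf v (F i).
Proof.
rewrite /vf exchange_big; apply: eq_bigr => d _; rewrite raddf_sum mulr_sumr //.
Qed.
End VF.

Section Gen.
Variables (K : numFieldType) (n : nat) (cc : 'I_n -> 'I_n -> 'I_n -> K) (r : 'M[K]_n).
Hypothesis assoc : forall i j k t, \sum_s cc i j s * cc s k t = \sum_s cc j k s * cc i s t.
Hypothesis rskew : forall p q, r p q = - r q p.
Hypothesis Hcybe : cybe cc r.

Definition rh_def p i : {mpoly K[n]} := \sum_k (cc p k i)%:MP * 'X_k.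
Fact rh_key : unit. Proof. by []. Qed.
Definition rh := locked_with rh_key rh_def.
Lemma rhE p i : rh p i = \sum_k (cc p k i)%:MP * 'X_k.
Proof. by rewrite /rh unlock. Qed.

Lemma rh_deriv p i d : (rh p i)^`M(d) = (cc p d i)%:MP.
Proof.
rewrite rhE raddf_sum (bigD1 d) //= [X in _ + X]big1 ?addr0.
  by rewrite mderiv_mulC mderivXU2 eqxx mulr1.
by move=> k nk; rewrite mderiv_mulC mderivXU2 (negbTE nk) mpolyC0 mulr0.
Qed.

Lemma vf_rh q p i : vf (rh q) (rh p i) = \sum_s (cc p q s)%:MP * rh s i.
Proof.
rewrite /vf; under eq_bigr => d _ do rewrite rh_deriv.
under eq_bigr => d _ do rewrite rhE mulr_suml.
under [RHS]eq_bigr => s _ do rewrite rhE.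
rewrite exchange_big; under [RHS]eq_bigr => s _ do rewrite mulr_sumr.
rewrite [RHS]exchange_big; apply: eq_bigr => k _.
transitivity ((\sum_d cc q k d * cc p d i)%:MP * 'X_k).
  by rewrite rmorph_sum mulr_suml; apply: eq_bigr => d _; rewrite rmorphM; ring.
rewrite -assoc rmorph_sum mulr_suml; apply: eq_bigr => s _; rewrite rmorphM; ring.
Qed.

Definition Tf (F : 'I_n -> 'I_n -> 'I_n -> K) l b e :=
  \sum_x \sum_y \sum_z (F x y z)%:MP * (rh x l * rh y b * rh z e).

Lemma TfD F G l b e : Tf (fun x y z => F x y z + G x y z) l b e = Tf F l b e + Tf G l b e.
Proof.
rewrite /Tf -big_split; apply: eq_bigr => x _; rewrite -big_split; apply: eq_bigr => y _.
rewrite -big_split; apply: eq_bigr => z _; rewrite rmorphD /=; ring.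
Qed.

Lemma Tf0 F l b e : (forall x y z, F x y z = 0) -> Tf F l b e = 0.
Proof.
move=> h; rewrite /Tf big1 // => x _; rewrite big1 // => y _; rewrite big1 // => z _.
by rewrite h mpolyC0 mul0r.
Qed.

Lemma Tf_rot1 F l b e : Tf F b e l = Tf (fun x y z => F y z x) l b e.
Proof.
rewrite /Tf; under eq_bigr => x _ do rewrite exchange_big.
rewrite exchange_big; apply: eq_bigr => x _; apply: eq_bigr => y _; apply: eq_bigr => z _.
ring.
Qed.

Lemma Tf_rot2 F l b e : Tf F e l b = Tf (fun x y z => F z x y) l b e.
Proof.
rewrite /Tf exchange_big; under eq_bigr => x _ do rewrite exchange_big.
apply: eq_bigr => x _; apply: eq_bigr => y _; apply: eq_bigr => z _.
ring.
Qed.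

Definition Cf x y z := \sum_q \sum_p' r x q * r p' z * cc p' q y
   + \sum_q \sum_q' r x q * r y q' * cc q' q z.

Lemma Cf_cyc x y z : Cf x y z + Cf y z x + Cf z x y = 0.
Proof.
have h := Hcybe y x z; rewrite /bc in h.
rewrite -[RHS]h /Cf.
set U1 := \sum_q \sum_p' r x q * r p' z * cc p' q y.
set U2 := \sum_q \sum_q' r x q * r y q' * cc q' q z.
set V1 := \sum_q \sum_p' r y q * r p' x * cc p' q z.
set V2 := \sum_q \sum_q' r y q * r z q' * cc q' q x.
set W1 := \sum_q \sum_p' r z q * r p' y * cc p' q x.
set W2 := \sum_q \sum_q' r z q * r x q' * cc q' q y.
have e1 : \sum_p \sum_q r p x * r q z * (cc p q y - cc q p y) = U1 + W2.
  rewrite /W2 /U1 [X in _ = _ + X]exchange_big -big_split; apply: eq_bigr => p _.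
  rewrite -big_split; apply: eq_bigr => q _ /=.
  rewrite (rskew x p) (rskew z q); ring.
have e2 : \sum_p \sum_q r y p * r q z * (cc p q x - cc q p x) = W1 + V2.
  rewrite /W1 /V2 [X in _ = X + _]exchange_big -big_split; apply: eq_bigr => p _.
  rewrite -big_split; apply: eq_bigr => q _ /=.
  rewrite (rskew z q) (rskew p y); ring.
have e3 : \sum_p \sum_q r y p * r x q * (cc p q z - cc q p z) = U2 + V1.
  rewrite /U2 /V1 [X in _ = X + _]exchange_big -big_split; apply: eq_bigr => p _.
  rewrite -big_split; apply: eq_bigr => q _ /=.
  rewrite (rskew q x); ring.
rewrite e1 e2 e3; ring.
Qed.

Definition Pure l b e := \sum_p \sum_q \sum_p' \sum_q' (r p q * r p' q')%:MP *
   (rh p l * (vf (rh q) (rh p' b) * rh q' e + rh p' b * vf (rh q) (rh q' e))).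


Definition Pure1 l b e := \sum_p \sum_q \sum_p' \sum_q' \sum_s
  (r p q * r p' q' * cc p' q s)%:MP * (rh p l * rh s b * rh q' e).
Definition Pure2 l b e := \sum_p \sum_q \sum_p' \sum_q' \sum_s
  (r p q * r p' q' * cc q' q s)%:MP * (rh p l * rh p' b * rh s e).

Lemma Pure_split l b e : Pure l b e = Pure1 l b e + Pure2 l b e.
Proof.
rewrite /Pure /Pure1 /Pure2 -big_split; apply: eq_bigr => p _.
rewrite -big_split; apply: eq_bigr => q _.
rewrite -big_split; apply: eq_bigr => p' _.
rewrite -big_split; apply: eq_bigr => q' _ /=.
rewrite !vf_rh -!big_split /=.
transitivity ((r p q * r p' q')%:MP * (rh p l * ((\sum_s (cc p' q s)%:MP * rh s b) * rh q' e)
  + rh p l * (rh p' b * \sum_s (cc q' q s)%:MP * rh s e))); first by ring.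
rewrite mulrDr big_split /=; congr (_ + _).
  rewrite mulr_suml !mulr_sumr; apply: eq_bigr => s _; rewrite !rmorphM /=; ring.
rewrite !mulr_sumr; apply: eq_bigr => s _; rewrite !rmorphM /=; ring.
Qed.

Lemma Pure1E l b e : Pure1 l b e =
  Tf (fun x y z => \sum_q \sum_p' r x q * r p' z * cc p' q y) l b e.
Proof.
symmetry; rewrite /Tf /Pure1; apply: eq_bigr => x _.
transitivity (\sum_y \sum_z \sum_q \sum_p'
   (r x q * r p' z * cc p' q y)%:MP * (rh x l * rh y b * rh z e)).
  apply: eq_bigr => y _; apply: eq_bigr => z _; rewrite rmorph_sum mulr_suml.
  by apply: eq_bigr => q _; rewrite rmorph_sum mulr_suml.
rewrite exchange_big /=.
under eq_bigr => z _ do rewrite exchange_big /=.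
under eq_bigr => z _ do under eq_bigr => q _ do rewrite exchange_big /=.
rewrite exchange_big /=.
under eq_bigr => q _ do rewrite exchange_big /=.
by [].
Qed.

Lemma Pure2E l b e : Pure2 l b e =
  Tf (fun x y z => \sum_q \sum_q' r x q * r y q' * cc q' q z) l b e.
Proof.
symmetry; rewrite /Tf /Pure2; apply: eq_bigr => x _.
transitivity (\sum_y \sum_z \sum_q \sum_q'
   (r x q * r y q' * cc q' q z)%:MP * (rh x l * rh y b * rh z e)).
  apply: eq_bigr => y _; apply: eq_bigr => z _; rewrite rmorph_sum mulr_suml.
  by apply: eq_bigr => q _; rewrite rmorph_sum mulr_suml.
under eq_bigr => y _ do rewrite exchange_big /=.
rewrite exchange_big /=.
under eq_bigr => q _ do under eq_bigr => y _ do rewrite exchange_big /=.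
by [].
Qed.

Lemma Pure_Tf l b e : Pure l b e = Tf Cf l b e.
Proof.
by rewrite Pure_split Pure1E Pure2E -TfD.
Qed.

Lemma Pure_cyc l b e : Pure l b e + Pure b e l + Pure e l b = 0.
Proof.
rewrite !Pure_Tf (Tf_rot1 Cf l b e) (Tf_rot2 Cf l b e) -!TfD; apply: Tf0 => x y z.
by rewrite -addrA addrC -addrA addrA Cf_cyc.
Qed.
End Gen.

Section Main.
Variables (K : numFieldType) (n : nat) (c : 'I_n -> 'I_n -> 'I_n -> K) (r : 'M[K]_n).

Lemma sum_delta (k l : 'I_n) (F : 'I_n -> 'I_n -> K) :
  \sum_a \sum_b (delta_mx k l : 'M[K]_n) a b * F a b = F k l.
Proof.
rewrite (bigD1 k) //= [X in _ + X]big1 ?addr0.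
  rewrite (bigD1 l) //= [X in _ + X]big1 ?addr0; first by rewrite mxE !eqxx mul1r.
  by move=> b nb; rewrite mxE eqxx (negbTE nb) mul0r.
by move=> a na; rewrite big1 // => b _; rewrite mxE (negbTE na) mul0r.
Qed.

Lemma sum_symE (k l : 'I_n) (F : 'I_n -> 'I_n -> K) :
  \sum_a \sum_b @symE K n k l a b * F a b = 2%:R^-1 * (F k l + F l k).
Proof.
rewrite -!sum_delta mulrDr !mulr_sumr -big_split; apply: eq_bigr => a _.
rewrite !mulr_sumr -big_split; apply: eq_bigr => b _.
rewrite !mxE /=; ring.
Qed.

Definition rho p i : {mpoly K[n]} := \sum_k (c p k i)%:MP * 'X_k.
Definition lam p i : {mpoly K[n]} := \sum_k (c k p i)%:MP * 'X_k.

Lemma sym_half (G : 'I_n -> 'I_n -> K) :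
  \sum_k \sum_l (2%:R^-1 * (G k l + G l k))%:MP * 'X_k * 'X_l
  = \sum_k \sum_l (G k l)%:MP * 'X_k * 'X_l :> {mpoly K[n]}.
Proof.
have h2 : (2%:R : K) != 0 by rewrite pnatr_eq0.
transitivity (\sum_k \sum_l ((2%:R^-1 * G k l)%:MP * 'X_k * 'X_l
   + (2%:R^-1 * G l k)%:MP * 'X_k * 'X_l) : {mpoly K[n]}).
  by apply: eq_bigr => k _; apply: eq_bigr => l _; rewrite mulrDr rmorphD /=; ring.
rewrite (eq_bigr _ (fun k _ => big_split _ _ _ _ _)) big_split /=.
rewrite [X in _ + X]exchange_big /= -big_split; apply: eq_bigr => k _.
rewrite -big_split; apply: eq_bigr => l _ /=.
have e : (2%:R^-1 + 2%:R^-1 : K) = 1.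
  by field.
rewrite -[in RHS](mul1r (G k l)) -[in RHS]e mulrDl rmorphD /=; ring.
Qed.

Definition Gc i j k l := \sum_a \sum_b r a b * (c a k i * c b l j - c k a i * c l b j).

Lemma tmul1 i j k l : tmul c r (@symE K n k l) i j = \sum_a \sum_b
   2%:R^-1 * (r a b * c a k i * c b l j + r a b * c a l i * c b k j).
Proof.
rewrite /tmul mxE; apply: eq_bigr => a _; apply: eq_bigr => b _.
rewrite -(sum_symE k l (fun a' b' => r a b * c a a' i * c b b' j)).
apply: eq_bigr => a' _; apply: eq_bigr => b' _; ring.
Qed.

Lemma tmul2 i j k l : tmul c (@symE K n k l) r i j = \sum_a \sum_b
   2%:R^-1 * (r a b * c k a i * c l b j + r a b * c l a i * c k b j).
Proof.
rewrite /tmul mxE.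
transitivity (\sum_a' \sum_b' @symE K n k l a' b' *
   \sum_a \sum_b r a b * c a' a i * c b' b j).
  apply: eq_bigr => a' _; apply: eq_bigr => b' _; rewrite mulr_sumr.
  by apply: eq_bigr => a _; rewrite mulr_sumr; apply: eq_bigr => b _; ring.
rewrite (sum_symE k l (fun a1 b1 => \sum_a \sum_b r a b * c a1 a i * c b1 b j)) -big_split mulr_sumr; apply: eq_bigr => a _; rewrite -big_split mulr_sumr /=.
by apply: eq_bigr => b _; ring.
Qed.

Lemma delta_symE i j k l :
  delta c r (@symE K n k l) i j = 2%:R^-1 * (Gc i j k l + Gc i j l k).
Proof.
transitivity (tmul c r (@symE K n k l) i j - tmul c (@symE K n k l) r i j); first by rewrite /delta !mxE.
rewrite tmul1 tmul2 /Gc -sumrB -big_split mulr_sumr; apply: eq_bigr => a _.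
rewrite -sumrB -big_split mulr_sumr; apply: eq_bigr => b _ /=; ring.
Qed.

Lemma pcoefE i j : pcoef c r i j =
  \sum_p \sum_q (r p q)%:MP * (rho p i * rho q j - lam p i * lam q j).
Proof.
rewrite /pcoef.
under eq_bigr => k _ do under eq_bigr => l _ do rewrite delta_symE.
rewrite (sym_half (Gc i j)) /Gc.
transitivity (\sum_k \sum_l \sum_p \sum_q ((r p q)%:MP *
  ((c p k i * c q l j)%:MP * 'X_k * 'X_l - (c k p i * c l q j)%:MP * 'X_k * 'X_l))
  : {mpoly K[n]}).
  apply: eq_bigr => k _; apply: eq_bigr => l _; rewrite !rmorph_sum /= !mulr_suml.
  apply: eq_bigr => p _; rewrite rmorph_sum /= !mulr_suml.
  by apply: eq_bigr => q _; rewrite !rmorphM /= !rmorphB /= !rmorphM /=; ring.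
under eq_bigr => k _ do rewrite exchange_big /=.
rewrite exchange_big /=; apply: eq_bigr => p _.
under eq_bigr => k _ do rewrite exchange_big /=.
rewrite exchange_big /=; apply: eq_bigr => q _.
rewrite /rho /lam !big_distrl /= -sumrB mulr_sumr; apply: eq_bigr => k _.
rewrite !big_distrr /= -sumrB mulr_sumr; apply: eq_bigr => l _.
rewrite !rmorphM /=; ring.
Qed.

Lemma tmul_tr (A B : 'M[K]_n) : (tmul c A B)^T = tmul c A^T B^T.
Proof.
apply/matrixP => i j; rewrite /tmul !mxE exchange_big /=; apply: eq_bigr => a _.
apply: eq_bigr => b _; rewrite exchange_big /=; apply: eq_bigr => a' _.
apply: eq_bigr => b' _; rewrite !mxE; ring.
Qed.

Lemma tmulNl (A B : 'M[K]_n) : tmul c (- A) B = - tmul c A B.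
Proof.
apply/matrixP => i j; rewrite /tmul !mxE -!sumrN; apply: eq_bigr => a _.
rewrite -sumrN; apply: eq_bigr => b _; rewrite -sumrN; apply: eq_bigr => a' _.
rewrite -sumrN; apply: eq_bigr => b' _; rewrite !mxE; ring.
Qed.

Lemma tmulNr (A B : 'M[K]_n) : tmul c A (- B) = - tmul c A B.
Proof.
apply/matrixP => i j; rewrite /tmul !mxE -!sumrN; apply: eq_bigr => a _.
rewrite -sumrN; apply: eq_bigr => b _; rewrite -sumrN; apply: eq_bigr => a' _.
rewrite -sumrN; apply: eq_bigr => b' _; rewrite !mxE; ring.
Qed.

Lemma delta_skew (X : 'M[K]_n) : r^T = - r -> X^T = X ->
  (delta c r X)^T = - delta c r X.
Proof.
move=> hr hX; rewrite /delta linearB /= !tmul_tr hr hX tmulNl tmulNr.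
by rewrite opprB opprK addrC.
Qed.

Hypothesis assoc : forall i j k t, \sum_s c i j s * c s k t = \sum_s c j k s * c i s t.
Hypothesis rskew : forall p q, r p q = - r q p.
Hypothesis Hcybe : cybe c r.

Definition cop : 'I_n -> 'I_n -> 'I_n -> K := fun p k i => c k p i.

Lemma assoc_op i j k t : \sum_s cop i j s * cop s k t = \sum_s cop j k s * cop i s t.
Proof.
rewrite /cop; symmetry; rewrite assoc; apply: eq_bigr => s _; ring.
Qed.

Lemma cybe_op : cybe cop r.
Proof.
move=> a b d; have := Hcybe a b d; rewrite /bc /cop => h.
rewrite -[RHS]oppr0 -{}[in RHS]h !opprD -!sumrN.
congr (_ + _ + _); apply: eq_bigr => p _; rewrite -sumrN; apply: eq_bigr => q _; ring.
Qed.

Definition Pm i j : {mpoly K[n]} :=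
  \sum_p \sum_q (r p q)%:MP * (rh c p i * rh c q j - rh cop p i * rh cop q j).

Lemma pcoefE' i j : pcoef c r i j = Pm i j.
Proof.
rewrite pcoefE /Pm; apply: eq_bigr => p _; apply: eq_bigr => q _.
by rewrite /rho /lam !rhE.
Qed.

Definition mu_def q p i : {mpoly K[n]} := \sum_k \sum_d (c q k d * c d p i)%:MP * 'X_k.
Fact mu_key : unit. Proof. by []. Qed.
Definition mu := locked_with mu_key mu_def.
Lemma muE q p i : mu q p i = \sum_k \sum_d (c q k d * c d p i)%:MP * 'X_k.
Proof. by rewrite /mu unlock. Qed.

Lemma vf_rl q p i : vf (rh c q) (rh cop p i) = mu q p i.
Proof.
rewrite /vf muE; under eq_bigr => d _ do rewrite rh_deriv rhE mulr_suml.
rewrite exchange_big; apply: eq_bigr => k _; apply: eq_bigr => d _.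
rewrite /cop !rmorphM /=; ring.
Qed.

Lemma vf_lr q p i : vf (rh cop q) (rh c p i) = mu p q i.
Proof.
rewrite /vf muE; under eq_bigr => d _ do rewrite rh_deriv rhE mulr_suml.
rewrite exchange_big; apply: eq_bigr => k _.
transitivity ((\sum_d c k q d * c p d i)%:MP * 'X_k).
  rewrite rmorph_sum mulr_suml; apply: eq_bigr => d _; rewrite /cop !rmorphM /=; ring.
rewrite -(assoc p k q i) rmorph_sum mulr_suml; apply: eq_bigr => d _; rewrite !rmorphM /=; ring.
Qed.

Lemma PvfE l F : \sum_d Pm l d * F^`M(d) = \sum_p \sum_q (r p q)%:MP *
   (rh c p l * vf (rh c q) F - rh cop p l * vf (rh cop q) F).
Proof.
rewrite /Pm /vf.
under eq_bigr => d _ do rewrite mulr_suml.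
under eq_bigr => d _ do under eq_bigr => p _ do rewrite mulr_suml.
rewrite exchange_big; apply: eq_bigr => p _; rewrite exchange_big; apply: eq_bigr => q _.
rewrite !mulr_sumr -sumrB mulr_sumr; apply: eq_bigr => d _; ring.
Qed.

Lemma vfP v b e : vf v (Pm b e) = \sum_p \sum_q (r p q)%:MP *
  ((vf v (rh c p b) * rh c q e + rh c p b * vf v (rh c q e))
   - (vf v (rh cop p b) * rh cop q e + rh cop p b * vf v (rh cop q e))).
Proof.
rewrite /Pm vf_sum; apply: eq_bigr => p _; rewrite vf_sum; apply: eq_bigr => q _.
by rewrite vfC vfB !vfM.
Qed.

Definition Mix l b e := \sum_p \sum_q \sum_p' \sum_q' (r p q * r p' q')%:MP *
  (rh c p l * (mu q p' b * rh cop q' e + rh cop p' b * mu q q' e)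
   + rh cop p l * (mu p' q b * rh c q' e + rh c p' b * mu q' q e)).

Lemma JtE l b e : \sum_d Pm l d * (Pm b e)^`M(d)
   = Pure c r l b e + Pure cop r l b e - Mix l b e.
Proof.
rewrite PvfE /Pure /Mix -big_split -sumrB; apply: eq_bigr => p _.
rewrite -big_split -sumrB; apply: eq_bigr => q _ /=.
rewrite !vfP !mulr_sumr -sumrB !mulr_sumr -big_split -sumrB /=; apply: eq_bigr => p' _.
rewrite !mulr_sumr -sumrB mulr_sumr -big_split -sumrB /=; apply: eq_bigr => q' _.
rewrite (vf_rl q p' b) (vf_rl q q' e) (vf_lr q p' b) (vf_lr q q' e) rmorphM /=.
ring.
Qed.

Definition M1 l b e := \sum_p \sum_q \sum_p' \sum_q' (r p q * r p' q')%:MP *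
  (rh c p l * mu q p' b * rh cop q' e).
Definition M2 l b e := \sum_p \sum_q \sum_p' \sum_q' (r p q * r p' q')%:MP *
  (rh c p l * rh cop p' b * mu q q' e).
Definition M3 l b e := \sum_p \sum_q \sum_p' \sum_q' (r p q * r p' q')%:MP *
  (rh cop p l * mu p' q b * rh c q' e).
Definition M4 l b e := \sum_p \sum_q \sum_p' \sum_q' (r p q * r p' q')%:MP *
  (rh cop p l * rh c p' b * mu q' q e).

Lemma MixE l b e : Mix l b e = M1 l b e + M2 l b e + M3 l b e + M4 l b e.
Proof.
rewrite /Mix /M1 /M2 /M3 /M4 -!big_split; apply: eq_bigr => p _.
rewrite -!big_split; apply: eq_bigr => q _.
rewrite -!big_split; apply: eq_bigr => p' _.
rewrite -!big_split; apply: eq_bigr => q' _ /=; ring.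
Qed.

Lemma M14 l b e : M1 l b e + M4 e l b = 0.
Proof.
apply/eqP; rewrite addr_eq0; apply/eqP.
rewrite /M1 /M4 -sumrN.
under eq_bigr => x _ do under eq_bigr => y _ do rewrite exchange_big.
under eq_bigr => x _ do rewrite exchange_big.
rewrite exchange_big.
under eq_bigr => x _ do under eq_bigr => y _ do rewrite exchange_big.
under eq_bigr => x _ do rewrite exchange_big.
apply: eq_bigr => p _; rewrite -sumrN; apply: eq_bigr => q _.
rewrite -sumrN; apply: eq_bigr => p' _; rewrite -sumrN; apply: eq_bigr => q' _.
rewrite (rskew q p) !rmorphM rmorphN /=; ring.
Qed.

Lemma M23 l b e : M2 l b e + M3 b e l = 0.
Proof.
apply/eqP; rewrite addr_eq0; apply/eqP.
rewrite /M2 /M3 -sumrN.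
under eq_bigr => x _ do rewrite exchange_big.
rewrite exchange_big.
under eq_bigr => x _ do under eq_bigr => y _ do rewrite exchange_big.
under eq_bigr => x _ do rewrite exchange_big.
under eq_bigr => x _ do under eq_bigr => y _ do rewrite exchange_big.
apply: eq_bigr => p _; rewrite -sumrN; apply: eq_bigr => q _.
rewrite -sumrN; apply: eq_bigr => p' _; rewrite -sumrN; apply: eq_bigr => q' _.
rewrite (rskew q' p') !rmorphM rmorphN /=; ring.
Qed.

Lemma Mix_cyc l b e : Mix l b e + Mix b e l + Mix e l b = 0.
Proof.
rewrite !MixE.
have h1 := M14 l b e; have h2 := M14 b e l; have h3 := M14 e l b.
have h4 := M23 l b e; have h5 := M23 b e l; have h6 := M23 e l b.
transitivity ((M1 l b e + M4 e l b) + (M1 b e l + M4 l b e) + (M1 e l b + M4 b e l)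
  + (M2 l b e + M3 b e l) + (M2 b e l + M3 e l b) + (M2 e l b + M3 l b e)); first ring.
by rewrite h1 h2 h3 h4 h5 h6 !addr0.
Qed.

Lemma Pm_skew i j : Pm i j = - Pm j i.
Proof.
rewrite /Pm exchange_big -sumrN; apply: eq_bigr => p _; rewrite -sumrN.
apply: eq_bigr => q _; rewrite (rskew q p) rmorphN /=; ring.
Qed.

Lemma Pm_genJ l b e : \sum_d (Pm l d * (Pm b e)^`M(d) + Pm b d * (Pm e l)^`M(d)
   + Pm e d * (Pm l b)^`M(d)) = 0.
Proof.
rewrite !big_split /= !JtE.
have hR := Pure_cyc assoc rskew Hcybe l b e.
have hL := Pure_cyc assoc_op rskew cybe_op l b e.
have hM := Mix_cyc l b e.
transitivity ((Pure c r l b e + Pure c r b e l + Pure c r e l b)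
  + (Pure cop r l b e + Pure cop r b e l + Pure cop r e l b)
  - (Mix l b e + Mix b e l + Mix e l b)); first ring.
by rewrite hR hL hM !subr0 addr0.
Qed.
End Main.
Lemma mult_red (K : fieldType) m k (P : 'I_m -> 'I_m -> {mpoly K[m]})
  (PP : 'I_k -> 'I_k -> {mpoly K[k]}) (t : m.-tuple {mpoly K[k]}) :
 (forall i j, \sum_a \sum_b PP a b * (tnth t i)^`M(a) * (tnth t j)^`M(b) = P i j \mPo t) ->
 forall f g, pbr PP (f \mPo t) (g \mPo t) = (pbr P f g) \mPo t.
Proof.
move=> h f g; rewrite /pbr.
under eq_bigr => a _ do under eq_bigr => b _ do rewrite (chain_rule t f a) (chain_rule t g b).
rewrite rmorph_sum.
under [RHS]eq_bigr => i _ do rewrite rmorph_sum.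
under [RHS]eq_bigr => i _ do under eq_bigr => j _ do rewrite !rmorphM /= -h.
transitivity (\sum_a \sum_b \sum_i \sum_j PP a b * (tnth t i)^`M(a) * (tnth t j)^`M(b)
   * (f^`M(i) \mPo t) * (g^`M(j) \mPo t)).
  apply: eq_bigr => a _; apply: eq_bigr => b _.
  rewrite [RHS]exchange_big mulr_sumr; apply: eq_bigr => j _ /=.
  rewrite mulr_sumr mulr_suml; apply: eq_bigr => i _ /=; ring.
under [LHS]eq_bigr => a _ do rewrite exchange_big /=.
rewrite exchange_big /=; apply: eq_bigr => i _.
under [LHS]eq_bigr => a _ do rewrite exchange_big /=.
rewrite exchange_big /=; apply: eq_bigr => j _.
rewrite !mulr_suml; apply: eq_bigr => a _; rewrite !mulr_suml; apply: eq_bigr => b _ /=.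
ring.
Qed.

Section Mult.
Variables (K : numFieldType) (n : nat) (c : 'I_n -> 'I_n -> 'I_n -> K) (r : 'M[K]_n).
Hypothesis assoc : forall i j k t, \sum_s c i j s * c s k t = \sum_s c j k s * c i s t.

Local Notation xL i := ('X_(lshift n i) : {mpoly K[n + n]}).
Local Notation xR i := ('X_(rshift n i) : {mpoly K[n + n]}).

Definition B (M : 'I_n -> 'I_n -> K) : {mpoly K[n + n]} :=
  \sum_s \sum_j (M s j)%:MP * xL s * xR j.

Lemma bil (a b : 'I_n -> 'I_n -> K) (X1 X2 : 'I_n -> {mpoly K[n + n]}) :
  \sum_i (\sum_s (a i s)%:MP * X1 s) * (\sum_j (b i j)%:MP * X2 j)
  = \sum_s \sum_j (\sum_i a i s * b i j)%:MP * X1 s * X2 j.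
Proof.
transitivity (\sum_i \sum_s \sum_j (a i s * b i j)%:MP * X1 s * X2 j).
  apply: eq_bigr => i _; rewrite mulr_suml; apply: eq_bigr => s _.
  rewrite mulr_sumr; apply: eq_bigr => j _; rewrite rmorphM /=; ring.
rewrite exchange_big /=; apply: eq_bigr => s _; rewrite exchange_big /=.
apply: eq_bigr => j _; rewrite rmorph_sum /= !mulr_suml; apply: eq_bigr => i _; ring.
Qed.

Lemma B_ext M1 M2 : (forall s j, M1 s j = M2 s j) -> B M1 = B M2.
Proof. by move=> h; apply: eq_bigr => s _; apply: eq_bigr => j _; rewrite h. Qed.

Lemma tnth_mm k : tnth (mult_map c) k =
  \sum_i \sum_j (c i j k)%:MP * xL i * xR j.
Proof. by rewrite tnth_map tnth_ord_tuple. Qed.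

Lemma mm_dL d k : (tnth (mult_map c) k)^`M(lshift n d) = \sum_j (c d j k)%:MP * xR j.
Proof.
rewrite tnth_mm raddf_sum (bigD1 d) //= [X in _ + X]big1 ?addr0.
  rewrite raddf_sum; apply: eq_bigr => j _.
  rewrite /= mderivM mderiv_mulC !mderivXU2 eq_lshift eqxx eq_rlshift /= mulr0n mpolyC0.
  rewrite mulr1n mpolyC1; ring.
move=> i ni; rewrite raddf_sum big1 // => j _.
rewrite /= mderivM mderiv_mulC !mderivXU2 eq_lshift (negbTE ni) eq_rlshift /= mulr0n mpolyC0.
ring.
Qed.

Lemma mm_dR d k : (tnth (mult_map c) k)^`M(rshift n d) = \sum_i (c i d k)%:MP * xL i.
Proof.
rewrite tnth_mm raddf_sum; apply: eq_bigr => i _.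
rewrite raddf_sum (bigD1 d) //= [X in _ + X]big1 ?addr0.
  rewrite /= mderivM mderiv_mulC !mderivXU2 eq_rshift eqxx eq_lrshift /= mulr0n mpolyC0.
  rewrite mulr1n mpolyC1; ring.
move=> j nj.
rewrite /= mderivM mderiv_mulC !mderivXU2 eq_rshift (negbTE nj) eq_lrshift /= mulr0n mpolyC0.
ring.
Qed.

Lemma rh_left cc p i : rh cc p i \mPo left_emb K n = \sum_k (cc p k i)%:MP * xL k.
Proof.
rewrite rhE rmorph_sum; apply: eq_bigr => k _.
by rewrite rmorphM /= comp_mpolyC comp_mpolyXU -tnth_nth tnth_map tnth_ord_tuple.
Qed.

Lemma rh_right cc p i : rh cc p i \mPo right_emb K n = \sum_k (cc p k i)%:MP * xR k.
Proof.
rewrite rhE rmorph_sum; apply: eq_bigr => k _.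
by rewrite rmorphM /= comp_mpolyC comp_mpolyXU -tnth_nth tnth_map tnth_ord_tuple.
Qed.

Lemma split_l (i : 'I_n) : split (lshift n i) = inl i.
Proof. exact: (unsplitK (inl _ i)). Qed.
Lemma split_r (i : 'I_n) : split (rshift n i) = inr i.
Proof. exact: (unsplitK (inr _ i)). Qed.

Lemma Q_split (P : 'I_n -> 'I_n -> {mpoly K[n]}) k l :
  \sum_a \sum_b prodP P a b * (tnth (mult_map c) k)^`M(a) * (tnth (mult_map c) l)^`M(b)
  = \sum_i \sum_j (P i j \mPo left_emb K n) * (\sum_t (c i t k)%:MP * xR t)
        * (\sum_t (c j t l)%:MP * xR t)
  + \sum_i \sum_j (P i j \mPo right_emb K n) * (\sum_t (c t i k)%:MP * xL t)
        * (\sum_t (c t j l)%:MP * xL t).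
Proof.
rewrite big_split_ord /=; congr (_ + _).
  apply: eq_bigr => i _; rewrite big_split_ord /= [X in _ + X]big1 ?addr0.
    by apply: eq_bigr => j _; rewrite /prodP !split_l !mm_dL.
  by move=> j _; rewrite /prodP split_l split_r !mul0r.
apply: eq_bigr => i _; rewrite big_split_ord /= big1 ?add0r.
  by apply: eq_bigr => j _; rewrite /prodP !split_r !mm_dR.
by move=> j _; rewrite /prodP split_l split_r !mul0r.
Qed.

Lemma Pm_comp (t : n.-tuple {mpoly K[n + n]}) i j : Pm c r i j \mPo t =
  \sum_p \sum_q (r p q)%:MP * ((rh c p i \mPo t) * (rh c q j \mPo t)
     - (rh (cop c) p i \mPo t) * (rh (cop c) q j \mPo t)).
Proof.
rewrite /Pm rmorph_sum; apply: eq_bigr => p _; rewrite rmorph_sum; apply: eq_bigr => q _.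
by rewrite rmorphM rmorphB /= !rmorphM /= comp_mpolyC.
Qed.

Lemma fact4 (u v : 'I_n -> 'I_n -> {mpoly K[n + n]}) (w z : 'I_n -> {mpoly K[n + n]}) :
  \sum_i \sum_j (\sum_p \sum_q (r p q)%:MP * (u p i * u q j - v p i * v q j)) * w i * z j
  = \sum_p \sum_q (r p q)%:MP * ((\sum_i u p i * w i) * (\sum_j u q j * z j)
      - (\sum_i v p i * w i) * (\sum_j v q j * z j)).
Proof.
transitivity (\sum_i \sum_j \sum_p \sum_q (r p q)%:MP * (u p i * u q j - v p i * v q j) * w i * z j).
  apply: eq_bigr => i _; apply: eq_bigr => j _; rewrite !mulr_suml; apply: eq_bigr => p _.
  by rewrite !mulr_suml.
under eq_bigr => i _ do rewrite exchange_big /=.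
rewrite exchange_big /=; apply: eq_bigr => p _.
under eq_bigr => i _ do rewrite exchange_big /=.
rewrite exchange_big /=; apply: eq_bigr => q _.
rewrite !mulr_suml -sumrB mulr_sumr; apply: eq_bigr => i _.
rewrite !mulr_sumr -sumrB mulr_sumr; apply: eq_bigr => j _; ring.
Qed.

Lemma bilR (M : 'I_n -> 'I_n -> K) :
  \sum_s \sum_t (M s t)%:MP * xR s * xL t = B (fun t s => M s t).
Proof.
rewrite /B exchange_big /=; apply: eq_bigr => t _; apply: eq_bigr => s _; ring.
Qed.

Lemma rh_mm cc p k : rh cc p k \mPo mult_map c = B (fun s j => \sum_t c s j t * cc p t k).
Proof.
rewrite rhE rmorph_sum /B.
transitivity (\sum_t \sum_s \sum_j (c s j t * cc p t k)%:MP * xL s * xR j).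
  apply: eq_bigr => t _; rewrite rmorphM /= comp_mpolyC comp_mpolyXU -tnth_nth tnth_mm.
  rewrite mulr_sumr; apply: eq_bigr => s _; rewrite mulr_sumr; apply: eq_bigr => j _.
  rewrite rmorphM /=; ring.
rewrite exchange_big /=; apply: eq_bigr => s _; rewrite exchange_big /=.
apply: eq_bigr => j _; rewrite rmorph_sum mulr_suml mulr_suml //.
Qed.


Lemma TL cc p k : \sum_i (rh cc p i \mPo left_emb K n) * \sum_t (c i t k)%:MP * xR t
  = B (fun s t => \sum_i cc p s i * c i t k).
Proof. under eq_bigr => i _ do rewrite rh_left. by rewrite bil. Qed.

Lemma TR cc p k : \sum_i (rh cc p i \mPo right_emb K n) * \sum_t (c t i k)%:MP * xL t
  = B (fun t s => \sum_i cc p s i * c t i k).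
Proof. under eq_bigr => i _ do rewrite rh_right. by rewrite bil bilR. Qed.

Lemma Q_eq k l :
  \sum_a \sum_b prodP (pcoef c r) a b * (tnth (mult_map c) k)^`M(a)
     * (tnth (mult_map c) l)^`M(b) = pcoef c r k l \mPo mult_map c.
Proof.
rewrite Q_split pcoefE' Pm_comp.
under eq_bigr => i _ do under eq_bigr => j _ do rewrite pcoefE' Pm_comp.
under [X in _ + X]eq_bigr => i _ do under eq_bigr => j _ do rewrite pcoefE' Pm_comp.
rewrite !fact4 -big_split /=; apply: eq_bigr => p _; rewrite -big_split /=.
apply: eq_bigr => q _.
rewrite !TL !TR !rh_mm.
have e1 : forall p k, B (fun s t => \sum_i c p s i * c i t k) =
   B (fun s j => \sum_t c s j t * c p t k).
  by move=> p' k'; apply: B_ext => s t; rewrite assoc.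
have e2 : forall p k, B (fun s t => \sum_i cop c p s i * c i t k) =
   B (fun t s => \sum_i c p s i * c t i k).
  by move=> p' k'; apply: B_ext => s t; rewrite /cop assoc.
have e3 : forall p k, B (fun t s => \sum_i cop c p s i * c t i k) =
   B (fun s j => \sum_t c s j t * cop c p t k).
  by move=> p' k'; apply: B_ext => s t; rewrite /cop assoc.
rewrite !e1 !e2 !e3; ring.
Qed.
End Mult.

Lemma sum_e (K : numFieldType) n (i : 'I_n) (F : 'I_n -> K) :
  \sum_a (delta_mx 0 i : 'rV[K]_n) 0 a * F a = F i.
Proof.
rewrite (bigD1 i) //= [X in _ + X]big1 ?addr0; first by rewrite mxE !eqxx mul1r.
by move=> a na; rewrite mxE (negbTE na) andbF mul0r.
Qed.

Lemma amul_eL (K : numFieldType) n (c : 'I_n -> 'I_n -> 'I_n -> K) i v t :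
  (amul c (delta_mx 0 i) v) 0 t = \sum_b v 0 b * c i b t.
Proof.
rewrite /amul mxE.
transitivity (\sum_a (delta_mx 0 i : 'rV[K]_n) 0 a * \sum_b v 0 b * c a b t).
  by apply: eq_bigr => a _; rewrite mulr_sumr; apply: eq_bigr => b _; ring.
by rewrite sum_e.
Qed.

Lemma amul_eR (K : numFieldType) n (c : 'I_n -> 'I_n -> 'I_n -> K) k u t :
  (amul c u (delta_mx 0 k)) 0 t = \sum_a u 0 a * c a k t.
Proof.
rewrite /amul mxE; apply: eq_bigr => a _.
transitivity (\sum_b (delta_mx 0 k : 'rV[K]_n) 0 b * (u 0 a * c a b t)).
  by apply: eq_bigr => b _; ring.
by rewrite sum_e.
Qed.

Lemma assoc_coord (K : numFieldType) n (c : 'I_n -> 'I_n -> 'I_n -> K) :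
  associative_sc c ->
  forall i j k t, \sum_s c i j s * c s k t = \sum_s c j k s * c i s t.
Proof.
move=> h i j k t.
have := congr1 (fun M : 'rV[K]_n => M 0 t) (h (delta_mx 0 i) (delta_mx 0 j) (delta_mx 0 k)).
rewrite /= amul_eR amul_eL => e.
transitivity (\sum_a (amul c (delta_mx 0 i) (delta_mx 0 j)) 0 a * c a k t).
  by apply: eq_bigr => a _; rewrite amul_eR sum_e.
rewrite e; apply: eq_bigr => b _; rewrite amul_eR sum_e //.
Qed.

Theorem corollary7 (K : numFieldType) (n : nat)
  (c : 'I_n -> 'I_n -> 'I_n -> K) (G : 'M[K]_n) (r : 'M[K]_n) :
  associative_sc c ->
  lie_subalgebra c G ->
  in_wedge G r ->
  cybe c r ->
  (forall X : 'M[K]_n, symm_tensor X -> (delta c r X)^T = - delta c r X) /\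
  is_poisson (pcoef c r) /\
  mult_poisson c (pcoef c r).
Proof.
move=> hA _ [_ hT] hC.
have assoc := assoc_coord hA.
have rskew : forall p q, r p q = - r q p.
  by move=> p q; have := congr1 (fun M : 'M[K]_n => M q p) hT; rewrite !mxE.
have Pskew : forall i j, pcoef c r i j = - pcoef c r j i.
  by move=> i j; rewrite !pcoefE' (Pm_skew c rskew).
split; first by move=> X hX; apply: delta_skew.
split; last first.
  by apply: mult_red => i j; apply: Q_eq.
split; first by move=> f g; apply: pbr_skew.
apply: pbr_jacobi => // l b e.
rewrite -[RHS](Pm_genJ assoc rskew hC l b e); apply: eq_bigr => d _; rewrite !pcoefE' //.
Qed.
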